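(* In the EnSolver setting described in the context (ensemble of $M$ base models, output domain of size $N_{\mathcal{S}}$, threshold $\tau$ with $M(1-\tau)$ a positive integer, and assumptions of independence and (A1)–(A3)), the skip rate of the EnSolver $m$ satisfies $$p\left( m(x) = s_{\text{skip}} \right) > \alpha \sum_{i=0}^{k-1}\binom{M}{i}\beta_{\text{min}}^i (1-\beta_{\text{max}})^{M-i} + (1-\alpha) - \frac{N_{\mathcal{S}}-\alpha}{N_{\mathcal{S}}-1}\, \mathcal{E}(M, N_{\mathcal{S}}, \tau),$$ where $k = M(1-\tau) + 1$ and $x \sim p$.
   Context: Setting: $\mathcal{S}$ is a finite set of output strings with $N_{\mathcal{S}} = |\mathcal{S}| \ge 2$; inputs $x \in \mathcal{X}$ are drawn from a probability distribution $p$ on $\mathcal{X}$, each $x$ having a single correct output $s_x \in \mathcal{S}$. $\mathcal{X}$ is the disjoint union of the in-distribution set $\mathcal{X}^{\text{in}}$ and the out-of-distribution set $\mathcal{X}^{\text{out}}$, and $\alpha = p(x \in \mathcal{X}^{\text{in}})$. An ensemble consists of $M$ base models $m_1, \dots, m_M$, each of which produces a (random) prediction $m_i(x) \in \mathcal{S}$ on input $x$; probabilities are taken jointly over $x \sim p$ and the predictions, and the base models make their predictions independently of each other given the input (in particular conditionally on $x \in \mathcal{X}^{\text{in}}$ and conditionally on $x \in \mathcal{X}^{\text{out}}$). Let $\beta_i = p(m_i(x) = s_x \mid x \in \mathcal{X}^{\text{in}})$, $\beta_{\text{min}} = \min_i \beta_i$, $\beta_{\text{max}} = \max_i \beta_i$.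 Assumptions: (A1) $\beta_{\text{min}} > 1/N_{\mathcal{S}}$; (A2) for each $i$, conditionally on $x \in \mathcal{X}^{\text{in}}$, $m_i(x)$ equals each incorrect string $s \neq s_x$ with probability $(1-\beta_i)/(N_{\mathcal{S}}-1)$; (A3) for each $i$, conditionally on $x \in \mathcal{X}^{\text{out}}$, $m_i(x)$ equals each $s \in \mathcal{S}$ with probability $1/N_{\mathcal{S}}$. For $x$ and $s \in \mathcal{S}$, $n(x,s)$ is the number of base models with $m_i(x) = s$. The threshold $\tau \in (0,1]$ is such that $M(1-\tau)$ is a positive integer. The EnSolver $m$ acts as follows on input $x$: let $p_{\max} = \max_{s} n(x,s)/M$ and uncertainty $u = 1 - p_{\max}$; if $u < \tau$ it outputs a string $y$ maximizing $n(x,\cdot)$, otherwise it outputs a special skip symbol $s_{\text{skip}}$. The out-of-distribution error bound is $\mathcal{E}(M, N_{\mathcal{S}}, \tau) = \binom{M}{\lfloor M/2 \rfloor} (N_{\mathcal{S}})^{-M(1-\tau)}$. *)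

(* Defs.v *)
From HB Require Import structures.
From mathcomp Require Import all_boot all_order all_algebra.
From mathcomp Require Import all_classical all_reals all_analysis.
Set Implicit Arguments. Unset Strict Implicit. Unset Printing Implicit Defensive.
Import Order.TTheory GRing.Theory Num.Theory.
Local Open Scope ring_scope.

Section EnSolver.
Variables (R : realType) (S : finType) (M : nat).

(* A vector of base-model predictions: t i = m_i(x). *)
Definition preds := {ffun 'I_M -> S}.

Definition nvotes (t : preds) (s : S) : nat := #|[set i | t i == s]|.

Definition maxvotes (t : preds) : nat := \max_(s : S) nvotes t s.

Definition pmax (t : preds) : R := (maxvotes t)%:R / M%:R.
Definition uncertainty (t : preds) : R := 1 - pmax t.

(* The EnSolver output: Some y (y maximizing n(x,.)) if u < tau,
   None = the skip symbol s_skip otherwise. *)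
Definition ensolver (tau : R) (t : preds) : option S :=
  if uncertainty t < tau then [pick s | nvotes t s == maxvotes t] else None.

(* Conditional probability (given the input x) that the EnSolver skips,
   when base model i predicts according to the conditional pmf q i x,
   independently of the other base models given x. *)
Definition cond_skip_prob (T : Type) (q : 'I_M -> T -> S -> R) (tau : R)
  (x : T) : R :=
  \sum_(t : preds) (\prod_(i < M) q i x (t i)) * (ensolver tau t == None)%:R.

(* Out-of-distribution error bound  E(M, N, tau) = C(M, floor(M/2)) N^{-M(1-tau)},
   where K = M(1-tau) (a positive integer). *)
Definition err_bound (N K : nat) : R := 'C(M, M./2)%:R * (N%:R ^+ K)^-1.

End EnSolver.

(* Main.v *)
Require Import Defs.
From HB Require Import structures.
From mathcomp Require Import all_boot all_order all_algebra.
From mathcomp Require Import all_classical all_reals all_analysis.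
From mathcomp Require Import zify ring lra.
Import Order.TTheory GRing.Theory Num.Theory.
Local Open Scope ring_scope.


Lemma bin_mono_half (n j : nat) : (2 * j.+1 <= n)%N -> ('C(n, j) <= 'C(n, j.+1))%N.
Proof.
move=> h.
have e := mul_bin_left n j.
have h1 : (j.+1 <= n - j)%N by lia.
have : (j.+1 * 'C(n, j) <= j.+1 * 'C(n, j.+1))%N.
  rewrite e; exact: leq_mul.
by rewrite leq_pmul2l.
Qed.

Lemma bin_le_half_low (n k : nat) : (k <= n./2)%N -> ('C(n, k) <= 'C(n, n./2))%N.
Proof.
move=> hk.
have : forall d, (d <= n./2 - k)%N -> ('C(n, k) <= 'C(n, k + d))%N.
  elim=> [|d IH] hd; first by rewrite addn0.
  apply: leq_trans (IH _) _; first lia.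
  rewrite addnS; apply: bin_mono_half.
  have : ((n./2).*2 <= n)%N by rewrite -{2}(odd_double_half n); lia.
  lia.
move=> /(_ (n./2 - k)%N (leqnn _)).
by rewrite subnKC.
Qed.

Lemma bin_le_half (n k : nat) : ('C(n, k) <= 'C(n, n./2))%N.
Proof.
case: (leqP k n./2) => hk; first exact: bin_le_half_low.
case: (leqP k n) => hkn; last by rewrite bin_small.
rewrite -bin_sub //; apply: bin_le_half_low.
have : (n <= (n./2).*2.+1)%N by rewrite -{1}(odd_double_half n); case: odd.
lia.
Qed.

Section Ex.
Variables (R : realType) (S : finType) (M : nat).
Implicit Types (Q G : 'I_M -> S -> R) (h : preds S M -> R).

Definition Ex Q h := \sum_(t : preds S M) (\prod_i Q i (t i)) * h t.

Lemma prod_sum (F : 'I_M -> S -> R) :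
  \sum_(t : preds S M) \prod_i F i (t i) = \prod_i \sum_u F i u.
Proof. by rewrite bigA_distr_bigA. Qed.

Lemma Ex_prod Q G :
  Ex Q (fun t => \prod_i G i (t i)) = \prod_i \sum_u Q i u * G i u.
Proof.
rewrite /Ex -prod_sum; apply: eq_bigr => t _; by rewrite -big_split.
Qed.

Lemma Ex_le Q h1 h2 : (forall i u, 0 <= Q i u) -> (forall t, h1 t <= h2 t) ->
  Ex Q h1 <= Ex Q h2.
Proof.
move=> hQ hh; apply: ler_sum => t _; apply: ler_wpM2l => //.
by apply: prodr_ge0 => i _.
Qed.

Lemma Ex1 Q : (forall i, \sum_u Q i u = 1) -> Ex Q (fun _ => 1) = 1.
Proof.
move=> h1; rewrite /Ex.
under eq_bigr do rewrite mulr1.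
by rewrite prod_sum big1.
Qed.

Lemma ExB Q h1 h2 : Ex Q (fun t => h1 t - h2 t) = Ex Q h1 - Ex Q h2.
Proof. by rewrite /Ex -sumrB; apply: eq_bigr => t _; rewrite mulrBr. Qed.

Lemma Ex_sum Q (I : finType) (P : pred I) (h : I -> preds S M -> R) :
  Ex Q (fun t => \sum_(s | P s) h s t) = \sum_(s | P s) Ex Q (h s).
Proof.
rewrite /Ex exchange_big /=; apply: eq_bigr => t _; by rewrite mulr_sumr.
Qed.


Lemma sum_ind Q i s : \sum_u Q i u * (u == s)%:R = Q i s.
Proof.
rewrite (bigD1 s) //= eqxx mulr1 big1 ?addr0 // => u /negbTE ->; by rewrite mulr0.
Qed.

Lemma tail Q s K p : (forall i u, 0 <= Q i u) -> (forall i, \sum_u Q i u = 1) ->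
  (forall i, Q i s <= p) ->
  Ex Q (fun t => (K < nvotes t s)%N%:R) <= 'C(M, K.+1)%:R * p ^+ K.+1.
Proof.
move=> hQ h1 hp.
pose G (A : {set 'I_M}) i u : R := if i \in A then (u == s)%:R else 1.
apply: le_trans (Ex_le Q (fun t => (K < nvotes t s)%N%:R) (fun t => \sum_(A : {set 'I_M} | #|A| == K.+1)
   \prod_i G A i (t i)) hQ _) _.
  move=> t; case h: (K < nvotes t s)%N; last first.
    apply: sumr_ge0 => A _; apply: prodr_ge0 => i _; rewrite /G; by case: ifP.
  move: h; rewrite /nvotes => /card_geqP [sq [usq ssq hsub]].
  have cA : #|[set i in sq]| = K.+1 by rewrite cardsE; move/card_uniqP: usq => ->.
  rewrite (bigD1 [set i in sq]) ?cA //= big1 ?lerDl.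
    apply: sumr_ge0 => A _; apply: prodr_ge0 => i _; rewrite /G; by case: ifP.
  move=> i _; rewrite /G; case: ifP => // /[!inE] /hsub; rewrite inE => /eqP ->.
  by rewrite eqxx.
rewrite Ex_sum.
apply: (@le_trans _ _ (\sum_(A : {set 'I_M} | #|A| == K.+1) p ^+ K.+1)).
  apply: ler_sum => A /eqP cA.
  move: (Ex_prod Q (G A)) => /= ->.
  apply: (@le_trans _ _ (\prod_i (if i \in A then p else 1))).
    apply: ler_prod => i _; rewrite /G; case: ifP => _.
      by rewrite sum_ind hQ hp.
    by under eq_bigr do rewrite mulr1; rewrite h1 lexx ler01.
  by rewrite -big_mkcond prodr_const cA.
have -> : \sum_(A : {set 'I_M} | #|A| == K.+1) p ^+ K.+1 =
   \sum_(A in [set A : {set 'I_M} | #|A| == K.+1]) p ^+ K.+1.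
  by apply: eq_bigl => A; rewrite inE.
by rewrite sumr_const card_draws card_ord mulr_natl.
Qed.

Lemma sum_nind Q i s : (\sum_u Q i u = 1) -> \sum_u Q i u * (u != s)%:R = 1 - Q i s.
Proof.
move=> h1.
have -> : 1 - Q i s = \sum_u Q i u - \sum_u Q i u * (u == s)%:R by rewrite h1 sum_ind.
rewrite -sumrB; apply: eq_bigr => u _.
by case: (u == s); rewrite ?mulr0 ?mulr1 ?subr0 ?subrr.
Qed.

Lemma part_card K (G : nat -> R) :
  \sum_(A : {set 'I_M} | (#|A| <= K)%N) G #|A| = \sum_(i < K.+1) 'C(M, i)%:R * G i.
Proof.
rewrite (partition_big (fun A : {set 'I_M} => (inord #|A| : 'I_K.+1)) predT) //=.
apply: eq_bigr => j _.
rewrite (eq_big (fun A : {set 'I_M} => A \in [set A : {set 'I_M} | #|A| == j]) (fun _ => G j)).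
- by rewrite sumr_const card_draws card_ord mulr_natl.
- move=> A; rewrite inE; case: (leqP #|A| K) => h /=.
    by rewrite -val_eqE /= inordK.
  apply/esym/negbTE; rewrite neq_ltn; apply/orP; right; exact: leq_trans (ltn_ord j) h.
- move=> A /andP [h /eqP <-]; by rewrite inordK.
Qed.

Lemma inlow Q s0 K (beta : 'I_M -> R) bmin bmax :
 (forall i u, 0 <= Q i u) -> (forall i, \sum_u Q i u = 1) -> (forall i, Q i s0 = beta i) ->
 0 <= bmin -> (forall i, bmin <= beta i) -> (forall i, beta i <= bmax) -> bmax <= 1 ->
 \sum_(i < K.+1) 'C(M, i)%:R * bmin ^+ i * (1 - bmax) ^+ (M - i)
   <= Ex Q (fun t => (nvotes t s0 <= K)%N%:R).
Proof.
move=> hQ h1 hb b0 hmin hmax bm1.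
pose H (A : {set 'I_M}) i u : R := if i \in A then (u == s0)%:R else (u != s0)%:R.
have pw : forall t, (nvotes t s0 <= K)%N%:R =
    \sum_(A : {set 'I_M} | (#|A| <= K)%N) \prod_i H A i (t i) :> R.
  move=> t; set B := [set i | t i == s0].
  have hp : forall A, \prod_i H A i (t i) = (A == B)%:R.
    move=> A; case: eqP => [->|/eqP neq].
      apply: big1 => i _; rewrite /H inE; by case: (t i == s0).
    have [i hi] : exists i, (i \in A) != (i \in B).
      apply/existsP; apply: contraR neq => /existsPn h; apply/eqP/setP => i.
      by move: (h i); rewrite negbK => /eqP.
    rewrite (bigD1 i) //= /H; move: hi; rewrite inE.
    by case: (i \in A); case: (t i == s0) => //= _; rewrite mul0r.
  under eq_bigr do rewrite hp.
  rewrite big_mkcond /= (bigD1 B) //= eqxx big1 ?addr0.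
    by rewrite /nvotes; case: ifP.
  by move=> A /negbTE ->; case: ifP.
have -> : Ex Q (fun t => (nvotes t s0 <= K)%N%:R) =
    Ex Q (fun t => \sum_(A : {set 'I_M} | (#|A| <= K)%N) \prod_i H A i (t i)).
  by rewrite /Ex; apply: eq_bigr => t _; rewrite pw.
have -> : \sum_(i < K.+1) 'C(M, i)%:R * bmin ^+ i * (1 - bmax) ^+ (M - i) =
   \sum_(A : {set 'I_M} | (#|A| <= K)%N) bmin ^+ #|A| * (1 - bmax) ^+ (M - #|A|).
  by rewrite (part_card K (fun i => bmin ^+ i * (1 - bmax) ^+ (M - i)));
     apply: eq_bigr => i _; rewrite mulrA.
rewrite Ex_sum; apply: ler_sum => A _.
move: (Ex_prod Q (H A)) => /= ->.
apply: (@le_trans _ _ (\prod_i (if i \in A then bmin else 1 - bmax))).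
  rewrite (bigID (fun i => i \in A)) /=.
  rewrite (eq_bigr (fun _ => bmin)); last by move=> i ->.
  rewrite [X in _ <= _ * X](eq_bigr (fun _ => 1 - bmax)); last by move=> i /negbTE ->.
  rewrite [X in _ <= _ * X](eq_bigl (fun i => i \in ~: A)); last by move=> i; rewrite inE.
  rewrite !prodr_const.
  have -> : #|~: A| = (M - #|A|)%N by move: (cardsC A); rewrite card_ord; lia.
  by [].
apply: ler_prod => i _; rewrite /H; case: ifP => _.
  by rewrite sum_ind hb b0 hmin.
rewrite sum_nind // hb subr_ge0 bm1 /=; by rewrite lerD2l lerN2.
Qed.

End Ex.
Arguments Ex {R S M}.

Section Skip.
Variables (R : realType) (S : finType) (M : nat).

Lemma skip_pw (tau : R) K (t : preds S M) : (0 < K)%N -> M%:R * (1 - tau) = K%:R ->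
  1 - \sum_s (K < nvotes t s)%N%:R <= (ensolver tau t == None)%:R :> R.
Proof.
move=> K0 hMK.
have sum0 : 0 <= \sum_s (K < nvotes t s)%N%:R :> R by apply: sumr_ge0 => s _.
case h: [forall s, nvotes t s <= K]%N.
  have hmax : (maxvotes t <= K)%N by apply/bigmax_leqP => s _; move/forallP: h.
  have M0 : (0 < M)%N.
    rewrite lt0n; apply/eqP => M0; move: hMK; rewrite M0 mul0r => /esym/eqP.
    by rewrite pnatr_eq0 => /eqP K00; move: K0; rewrite K00.
  have -> : ensolver tau t = None.
    rewrite /ensolver /uncertainty /pmax ifN //; rewrite -leNgt.
    have hM : 0 < M%:R :> R by rewrite ltr0n.
    rewrite lerBrDl -lerBrDr ler_pdivrMr // mulrC hMK ler_nat //.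
  by rewrite eqxx lerBlDr lerDl.
move/negbT: h => /forallPn [s]; rewrite -ltnNge => hs.
apply: (@le_trans _ _ 0); last by case: (_ == _).
rewrite subr_le0 (bigD1 s) //= hs lerDl; by apply: sumr_ge0 => u _.
Qed.

End Skip.


Lemma fin_arith (R : realType) (Nr al Ls C1 Cm : R) (K : nat) : 2 <= Nr -> 0 <= al -> al <= 1 ->
 0 <= C1 -> C1 <= Cm -> 0 < Cm ->
 al * Ls + (1 - al) - (Nr - al)/(Nr - 1) * (Cm * (Nr ^+ K)^-1) <
 (Ls - (Nr - 1) * (C1 * (1/Nr)^+K.+1)) * al + (1 - Nr * (C1 * (1/Nr)^+K.+1)) * (1 - al).
Proof.
move=> N2 al0 al1 C10 C1m Cm0.
have Nr0 : 0 < Nr by lra.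
have z0 : 0 < (Nr ^+ K)^-1 by rewrite invr_gt0 exprn_gt0.
set z := (Nr ^+ K)^-1 in z0 *.
have -> : (1/Nr)^+K.+1 = z / Nr by rewrite exprSr div1r exprVn.
rewrite -subr_gt0.
have -> : (Ls - (Nr - 1) * (C1 * (z / Nr))) * al + (1 - Nr * (C1 * (z / Nr))) * (1 - al) -
   (al * Ls + (1 - al) - (Nr - al) / (Nr - 1) * (Cm * z)) =
   (Nr - al) * ((Cm - C1) * z / Nr + Cm * z / (Nr * (Nr - 1))).
  field; apply/andP; split; apply/negP => /eqP; lra.
apply: mulr_gt0; first lra.
apply: ltr_wpDl.
  apply: divr_ge0; last lra; apply: mulr_ge0; lra.
apply: divr_gt0; first exact: mulr_gt0.
apply: mulr_gt0; lra.
Qed.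

Local Open Scope classical_set_scope.
Local Open Scope ring_scope.

Section Integ.
Variables (d : measure_display) (X : measurableType d) (R : realType).

Lemma meas_sum (I : Type) (r : seq I) (P : pred I) (F : I -> X -> R) :
  (forall i, measurable_fun setT (F i)) ->
  measurable_fun setT (fun x => \sum_(i <- r | P i) F i x).
Proof.
move=> hF; elim: r => [|i r IH].
  by under eq_fun do rewrite big_nil; exact: measurable_cst.
under eq_fun do rewrite big_cons.
case: (P i) => //.
exact: measurable_realfun.measurable_funD.
Qed.

Lemma meas_prod (I : Type) (r : seq I) (P : pred I) (F : I -> X -> R) :
  (forall i, measurable_fun setT (F i)) ->
  measurable_fun setT (fun x => \prod_(i <- r | P i) F i x).
Proof.
move=> hF; elim: r => [|i r IH].
  by under eq_fun do rewrite big_nil; exact: measurable_cst.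
under eq_fun do rewrite big_cons.
case: (P i) => //.
exact: measurable_realfun.measurable_funM.
Qed.

Lemma int_lb (Pr : probability X R) (A : set X) (f : X -> R) (a b : R) :
  measurable A -> measurable_fun setT f -> (forall x, 0 <= f x) ->
  (forall x, A x -> a <= f x) -> (forall x, ~ A x -> b <= f x) ->
  ((a * fine (Pr A) + b * (1 - fine (Pr A)))%:E <= \int[Pr]_x (f x)%:E)%E.
Proof.
move=> mA mf f0 ha hb.
have PA0 : (0 <= Pr A)%E := measure_ge0 _ _.
have PA1 : (Pr A <= 1)%E := probability_le1 _ mA.
have finA : Pr A \is a fin_num by rewrite ge0_fin_numE // (le_lt_trans PA1) // ltey.
set al := fine (Pr A).
have eA : Pr A = al%:E by rewrite fineK.
have eC : Pr (~` A) = (1 - al)%:E by rewrite probability_setC // eA.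
rewrite -(setUv A) ge0_integral_setU //; first last.
- by apply/disj_set2P; rewrite setICr.
- by move=> x _; rewrite lee_fin.
- by rewrite setUv; apply/measurable_realfun.measurable_EFinP.
- exact: measurableC.
have i1 : (((Num.max a 0) * al)%:E <= \int[Pr]_(x in A) (f x)%:E)%E.
  apply: (@le_trans _ _ (\int[Pr]_(x in A) (cst (Num.max a 0)%:E x))%E).
    rewrite integral_cst // EFinM; rewrite le_eqVlt; apply/orP; left; apply/eqP; congr (_ * _)%E; exact: (esym eA).

  apply: ge0_le_integral => //.
  - by move=> x _; rewrite lee_fin /= le_max lexx orbT.
  - by apply/measurable_realfun.measurable_EFinP; exact: measurable_funTS.
  - move=> x Ax; rewrite lee_fin /= ge_max ha //; exact: f0.
have i2 : (((Num.max b 0) * (1 - al))%:E <= \int[Pr]_(x in ~` A) (f x)%:E)%E.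
  apply: (@le_trans _ _ (\int[Pr]_(x in ~` A) (cst (Num.max b 0)%:E x))%E).
    rewrite integral_cst; last exact: measurableC.
    rewrite EFinM; rewrite le_eqVlt; apply/orP; left; apply/eqP; congr (_ * _)%E; exact: (esym eC).
  apply: ge0_le_integral => //.
  - exact: measurableC.
  - by move=> x _; rewrite lee_fin /= le_max lexx orbT.
  - by apply/measurable_realfun.measurable_EFinP; exact: measurable_funTS.
  - move=> x Ax; rewrite lee_fin /= ge_max hb //; exact: f0.
apply: le_trans (leeD i1 i2).
have al0 : 0 <= al by rewrite -lee_fin -eA.
have al1 : al <= 1 by rewrite -lee_fin -eA.
rewrite -EFinD lee_fin; apply: lerD; apply: ler_wpM2r; rewrite ?subr_ge0 ?le_max ?lexx //.
Qed.

End Integ.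

Theorem lemma4 (R : realType) (S : finType) (M : nat)
  (d : measure_display) (X : measurableType d) (P : probability X R)
  (Xin : set X) (sx : X -> S) (q : 'I_M -> X -> S -> R)
  (beta : 'I_M -> R) (bmin bmax tau : R) (K : nat) :
  (* finite output domain with N_S >= 2 *)
  (2 <= #|S|)%N ->
  (* in-distribution set is an event; s_x and the predictions are measurable in x *)
  measurable Xin ->
  (forall s : S, measurable (sx @^-1` [set s])) ->
  (forall (i : 'I_M) (s : S), measurable_fun setT (fun x => q i x s)) ->
  (* q i x is the law of m_i(x) given the input x *)
  (forall i x s, 0 <= q i x s) ->
  (forall i x, \sum_(s : S) q i x s = 1) ->
  (* beta_i = p(m_i(x) = s_x | x in X^in) *)
  (forall i x, Xin x -> q i x (sx x) = beta i) ->
  (* beta_min, beta_max *)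
  (forall i, bmin <= beta i) -> (exists i, beta i = bmin) ->
  (forall i, beta i <= bmax) -> (exists i, beta i = bmax) ->
  (* (A1) *)
  bmin > 1 / #|S|%:R ->
  (* (A2) *)
  (forall i x s, Xin x -> s != sx x -> q i x s = (1 - beta i) / (#|S|%:R - 1)) ->
  (* (A3) *)
  (forall i x s, ~ Xin x -> q i x s = 1 / #|S|%:R) ->
  (* threshold: tau in (0,1], M(1-tau) = K a positive integer *)
  0 < tau -> tau <= 1 -> (0 < K)%N -> M%:R * (1 - tau) = K%:R ->
  let alpha := fine (P Xin) in
  let N := #|S| in
  let k := K.+1 in
  ((alpha * \sum_(i < K.+1) 'C(M, i)%:R * bmin ^+ i * (1 - bmax) ^+ (M - i)
     + (1 - alpha)
     - (N%:R - alpha) / (N%:R - 1) * err_bound R M N K)%:E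
   < \int[P]_x (cond_skip_prob q tau x)%:E)%E.
Proof.
move=> hN mXin msx mq q0 q1 qin hmin [i1 hi1] hmax [i2 hi2] hA1 hA2 hA3 tau0 tau1 K0 hMK.
cbv zeta.
set N := #|S|.
set alpha := fine (P Xin).
have N2 : 2 <= N%:R :> R by rewrite ler_nat.
have Nr0 : 0 < N%:R :> R by lra.
set D := 'C(M, K.+1)%:R * (1 / N%:R) ^+ K.+1 : R.
have base : forall x, 1 - \sum_s Ex (fun i u => q i x u) (fun t => (K < nvotes t s)%N%:R)
    <= cond_skip_prob q tau x.
  move=> x.
  have -> : 1 - \sum_s Ex (fun i u => q i x u) (fun t => (K < nvotes t s)%N%:R) =
      Ex (fun i u => q i x u) (fun t => 1 - \sum_s (K < nvotes t s)%N%:R).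
    rewrite (@ExB _ _ _ (fun i u => q i x u) (fun _ => 1)
      (fun t => \sum_s (K < nvotes t s)%N%:R)).
    by rewrite Ex_sum (@Ex1 _ _ _ (fun i u => q i x u) (q1 ^~ x)).
  apply: Ex_le => [i u|t /=]; first exact: q0.
  exact: (@skip_pw R S M tau K t K0 hMK).
have hout : forall x, ~ Xin x -> 1 - N%:R * D <= cond_skip_prob q tau x.
  move=> x nx; apply: le_trans (base x); apply: lerB => //.
  apply: (@le_trans _ _ (\sum_(s : S) D)); last by rewrite sumr_const mulr_natl.
  apply: ler_sum => s _; apply: tail => //.
  by move=> i; rewrite hA3.
have hin : forall x, Xin x -> \sum_(i < K.+1) 'C(M, i)%:R * bmin ^+ i * (1 - bmax) ^+ (M - i)
     - (N%:R - 1) * D <= cond_skip_prob q tau x.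
  move=> x xin; set s0 := sx x.
  have hNi : 0 < 1 / N%:R :> R by rewrite div1r invr_gt0.
  have b0 : 0 <= bmin by lra.
  have bm1 : bmax <= 1.
    rewrite -hi2 -(qin i2 x xin) -(q1 i2 x) (bigD1 s0) //= lerDl.
    by apply: sumr_ge0 => u _; exact: q0.
  apply: le_trans (base x); rewrite (bigD1 s0) //= opprD addrA.
  apply: lerB.
    have -> : 1 - Ex (fun i u => q i x u) (fun t => (K < nvotes t s0)%N%:R) =
        Ex (fun i u => q i x u) (fun t => (nvotes t s0 <= K)%N%:R).
      have -> : Ex (fun i u => q i x u) (fun t => (nvotes t s0 <= K)%N%:R) =
          Ex (fun i u => q i x u) (fun t => 1 - (K < nvotes t s0)%N%:R).
        rewrite /Ex; apply: eq_bigr => t _; congr (_ * _).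
        by rewrite ltnNge; case: (_ <= _)%N; rewrite /= ?subr0 ?subrr.
      rewrite (@ExB _ _ _ (fun i u => q i x u) (fun _ => 1)
        (fun t => (K < nvotes t s0)%N%:R)).
      by rewrite (@Ex1 _ _ _ (fun i u => q i x u) (q1 ^~ x)).
    apply: (@inlow R S M (fun i u => q i x u) s0 K beta bmin bmax) => //.
    by move=> i; rewrite qin.
  apply: (@le_trans _ _ (\sum_(s | s != s0) D)).
    apply: ler_sum => s ns; apply: tail => //.
    move=> i; rewrite (hA2 i x s xin ns).
    have N1 : 0 < N%:R - 1 :> R by lra.
    rewrite ler_pdivrMr //.
    have -> : 1 / N%:R * (N%:R - 1) = 1 - 1 / N%:R :> R.
      by field; apply/negP => /eqP; lra.
    move: (hmin i); lra.
  have -> : \sum_(s | s != s0) D = \sum_(s in predC1 s0) D by [].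
  rewrite sumr_const cardC1 -(mulr_natl D) -subn1 natrB ?lexx //; lia.
have f0 : forall x, 0 <= cond_skip_prob q tau x.
  move=> x; apply: sumr_ge0 => t _; apply: mulr_ge0; last by case: (_ == _).
  by apply: prodr_ge0 => i _; exact: q0.
have mf : measurable_fun setT (fun x => cond_skip_prob q tau x).
  have hF : forall t : preds S M, measurable_fun setT
      (fun x => (\prod_i q i x (t i)) * (ensolver tau t == None)%:R : R).
    move=> t; apply: measurable_realfun.measurable_funM; last exact: measurable_cst.
    exact: (@meas_prod d X R _ (index_enum _) xpredT (fun i x => q i x (t i))).
  exact: (@meas_sum d X R (preds S M) (index_enum _) xpredT
     (fun t x => (\prod_i q i x (t i)) * (ensolver tau t == None)%:R) hF).
have := @int_lb d X R P Xin (fun x => cond_skip_prob q tau x) _ _ mXin mf f0 hin hout.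
apply: lt_le_trans; rewrite lte_fin.
have PA0 : (0 <= P Xin)%E := measure_ge0 _ _.
have PA1 : (P Xin <= 1)%E := probability_le1 _ mXin.
have finA : P Xin \is a fin_num by rewrite ge0_fin_numE // (le_lt_trans PA1) // ltey.
have eA : P Xin = alpha%:E by rewrite fineK.
have al0 : 0 <= alpha by rewrite -lee_fin -eA.
have al1 : alpha <= 1 by rewrite -lee_fin -eA.
rewrite /err_bound; apply: fin_arith => //.
- by rewrite ler_nat bin_le_half.
- by rewrite ltr0n bin_gt0 -divn2 leq_div.
Qed.
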